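(* Consider a Markov coding game and the MEME sender policy constructed from an MDP policy $\pi$ (as described in the context). Fix a time $t$, a history $h^t=(s^0,a^0,\dots,s^t)$ and the corresponding posterior $b^t$ over messages. For a decision rule $\sigma:\mathcal{M}\to\Delta(\mathcal{A})$, let $M\sim b^t$, $A^t\sim\sigma(M)$, $S^{t+1}\sim\mathcal{T}(s^t,A^t)$, and $H^{t+1}=(h^t,A^t,S^{t+1})$. Among all decision rules $\sigma$ satisfying the marginal constraint $\sum_{m} b^t(m)\sigma(m)(a)=\pi(s^t)(a)$ for all $a\in\mathcal{A}$, the MEME decision rule $\sigma(m)=\nu(A\mid M=m)$ with $\nu=\mathrm{MEC}(b^t,\pi(s^t))$ maximizes the mutual information $\mathcal{I}(M;H^{t+1}\mid b^t,h^t)$.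
   Context: A (finite, episodic) Markov decision process is $\langle \mathcal{S},\mathcal{A},\mathcal{R},\mathcal{T}\rangle$ with finite state set $\mathcal{S}$, finite action set $\mathcal{A}$, reward $\mathcal{R}:\mathcal{S}\times\mathcal{A}\to\mathbb{R}$ and transition function $\mathcal{T}:\mathcal{S}\times\mathcal{A}\to\Delta(\mathcal{S})$. A Markov coding game (MCG) is $\langle(\mathcal{S},\mathcal{A},\mathcal{T},\mathcal{R}),\mathcal{M},\mu,\zeta\rangle$ where $\mathcal{M}$ is a finite message set, $\mu\in\Delta(\mathcal{M})$ is the prior, and $\zeta\ge 0$. A message $M\sim\mu$ is revealed to the sender, who plays the MDP with a message-conditional policy, producing a trajectory observed by the receiver. A minimum entropy coupling $\mathrm{MEC}(p,q)$ of distributions $p\in\Delta(\mathcal{M})$ and $q\in\Delta(\mathcal{A})$ is a joint distribution $\nu$ on $\mathcal{M}\times\mathcal{A}$ whose marginals are $p$ and $q$ and whose joint entropy $\mathcal{H}(M,A)$ is minimal among all such joint distributions. MEME sender: given an MDP policy $\pi:\mathcal{S}\to\Delta(\mathcal{A})$, set $b^0=\mu$; at time $t$ in state $s^t$ with current posterior $b^t=\mathcal{P}(M\mid h^t,\pi_{\mid M}^{:t})$ over the message given the history and the sender's past policy, compute $\nu=\mathrm{MEC}(b^t,\pi(s^t))$ and act according to $\pi_{\mid M}(s^t,m)=\nu(A\mid M=m)$; the posterior is then updated by Bayes' rule. Mutual information is $\mathcal{I}(X;Y)=\mathcal{H}(X)-\mathcal{H}(X\mid Y)$ with $\mathcal{H}$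 the Shannon entropy. *)

(* Defs.v *)
From HB Require Import structures.
From mathcomp Require Import all_boot all_order all_algebra.
From mathcomp Require Import reals exp.
Set Implicit Arguments. Unset Strict Implicit. Unset Printing Implicit Defensive.
Import Order.TTheory GRing.Theory Num.Theory.
Local Open Scope ring_scope.

Section Defs.
Variable R : realType.

Definition is_dist (T : finType) (p : T -> R) : Prop :=
  (forall x, 0 <= p x) /\ \sum_x p x = 1.

(* Shannon entropy (natural log; 0 ln 0 = 0 since ln 0 = 0 in the library) *)
Definition entropy (T : finType) (p : T -> R) : R :=
  - \sum_x p x * ln (p x).

Definition marg1 (X Y : finType) (j : X * Y -> R) (x : X) : R := \sum_y j (x, y).
Definition marg2 (X Y : finType) (j : X * Y -> R) (y : Y) : R := \sum_x j (x, y).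

Definition cond_entropy (X Y : finType) (j : X * Y -> R) : R :=
  - \sum_xy j xy * ln (j xy / marg2 j xy.2).

Definition mutual_info (X Y : finType) (j : X * Y -> R) : R :=
  entropy (marg1 j) - cond_entropy j.

Definition is_coupling (X Y : finType) (p : X -> R) (q : Y -> R) (nu : X * Y -> R) : Prop :=
  is_dist nu /\ (forall x, marg1 nu x = p x) /\ (forall y, marg2 nu y = q y).

Definition is_MEC (X Y : finType) (p : X -> R) (q : Y -> R) (nu : X * Y -> R) : Prop :=
  is_coupling p q nu /\ forall nu', is_coupling p q nu' -> entropy nu <= entropy nu'.

Definition decision_rule (M A : finType) (sigma : M -> A -> R) : Prop :=
  forall m, is_dist (sigma m).

Definition marginal_constraint (M A : finType) (b : M -> R) (sigma : M -> A -> R)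
  (q : A -> R) : Prop :=
  forall a, \sum_m b m * sigma m a = q a.

(* MEME decision rule: sigma(m) = nu(A | M = m); when b m = 0 the conditional
   is undefined and we (arbitrarily) use q *)
Definition meme_rule (M A : finType) (b : M -> R) (q : A -> R) (nu : M * A -> R)
  (m : M) (a : A) : R :=
  if b m == 0 then q a else nu (m, a) / b m.

(* joint law of (M, (A^t, S^{t+1})) given current state s and posterior b *)
Definition joint_next (M A S : finType) (b : M -> R) (sigma : M -> A -> R)
  (T : S -> A -> S -> R) (s : S) (x : M * (A * S)) : R :=
  b x.1 * sigma x.1 x.2.1 * T s x.2.1 x.2.2.

End Defs.

(* Main.v *)
Require Import Defs.
From HB Require Import structures.
From mathcomp Require Import all_boot all_order all_algebra.
From mathcomp Require Import reals exp.
From mathcomp Require Import lra.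
Import Order.TTheory GRing.Theory Num.Theory.
Local Open Scope ring_scope.

Lemma sum_pair (R : realType) (X Y : finType) (F : X * Y -> R) :
  \sum_(p : X * Y) F p = \sum_x \sum_y F (x, y).
Proof. by rewrite pair_big; apply: eq_bigr => -[x y] _. Qed.

Lemma entropy_ext (R : realType) (X : finType) (f g : X -> R) :
  f =1 g -> entropy f = entropy g.
Proof. by move=> e; rewrite /entropy; congr (- _); apply: eq_bigr => x _; rewrite e. Qed.

Lemma cond_term (R : realType) (c t q : R) :
  (c * t) * ln ((c * t) / (q * t)) = t * (c * ln (c / q)).
Proof.
have [->|t0] := eqVneq t 0; first by rewrite !mulr0 !mul0r.
by rewrite invfM mulrACA divff // mulr1 [c * t]mulrC -mulrA.
Qed.

Lemma log_term (R : realType) (c q : R) : 0 <= c -> c <= q ->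
  c * ln (c / q) = c * ln c - c * ln q.
Proof.
move=> c0 cq; have [->|cn0] := eqVneq c 0; first by rewrite !mul0r subr0.
have cp : 0 < c by rewrite lt_def cn0.
have qp : 0 < q by apply: lt_le_trans cq.
by rewrite lnM ?posrE ?invr_gt0 // lnV ?posrE // mulrDr mulrN.
Qed.

Lemma mi_eq (R : realType) (M A S : finType)
  (T : S -> A -> S -> R) (hT : forall s a, is_dist (T s a)) (s : S)
  (b : M -> R) (hb : forall m, 0 <= b m) (sigma : M -> A -> R)
  (hs : decision_rule sigma) (q : A -> R) (hq : marginal_constraint b sigma q) :
  mutual_info (joint_next b sigma T s) =
  entropy b + entropy q - entropy (fun x : M * A => b x.1 * sigma x.1 x.2).
Proof.
have m1 : marg1 (joint_next b sigma T s) =1 b.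
  move=> m; rewrite /marg1 sum_pair /joint_next /=.
  rewrite (eq_bigr (fun a => b m * sigma m a)); last first.
    by move=> a _; rewrite -mulr_sumr (hT s a).2 mulr1.
  by rewrite -mulr_sumr (hs m).2 mulr1.
have m2 : forall y, marg2 (joint_next b sigma T s) y = q y.1 * T s y.1 y.2.
  by move=> [a s'] /=; rewrite /marg2 /joint_next /= -mulr_suml hq.
rewrite /mutual_info.
have -> : cond_entropy (joint_next b sigma T s) =
   entropy (fun x : M * A => b x.1 * sigma x.1 x.2) - entropy q.
  rewrite /cond_entropy sum_pair.
  transitivity (- \sum_m \sum_a (b m * sigma m a) * ln (b m * sigma m a / q a)).
    congr (- _); apply: eq_bigr => m _; rewrite sum_pair; apply: eq_bigr => a _.
    rewrite (eq_bigr (fun s' => T s a s' * (b m * sigma m a * ln (b m * sigma m a / q a)))); last first.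
      by move=> s' _; rewrite m2 /joint_next /= cond_term.
    by rewrite -mulr_suml (hT s a).2 mul1r.
  transitivity (- \sum_m \sum_a (b m * sigma m a * ln (b m * sigma m a)
                          - b m * sigma m a * ln (q a))).
    congr (- _); apply: eq_bigr => m _; apply: eq_bigr => a _.
    apply: log_term; first by rewrite mulr_ge0 // (hs m).1.
    rewrite -(hq a) (bigD1 m) //= lerDl sumr_ge0 // => i _.
    by rewrite mulr_ge0 // (hs i).1.
  under eq_bigr => m _ do rewrite sumrB.
  rewrite sumrB.
  have -> : \sum_m \sum_a b m * sigma m a * ln (q a) = \sum_a q a * ln (q a).
    by rewrite exchange_big; apply: eq_bigr => a _; rewrite -mulr_suml hq.
  rewrite /entropy sum_pair /=.
  by rewrite opprB opprK addrC.
rewrite (@entropy_ext _ _ _ _ m1).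
by rewrite opprB addrA.
Qed.


Lemma nuz_lem (R : realType) (M A : finType) (b : M -> R) (q : A -> R) (nu : M * A -> R)
  (hnu : is_MEC b q nu) m a : b m = 0 -> nu (m, a) = 0.
Proof.
have [[[nu0 nu1] [nm1 nm2]] nmin] := hnu.
move=> bm0; have := nm1 m; rewrite /marg1 bm0 => /psumr_eq0P H.
by apply: H => // a' _.
Qed.

Arguments nuz_lem {R M A b q nu} hnu m a _.

Lemma meme_dr (R : realType) (M A : finType) (b : M -> R) (hb : is_dist b)
  (q : A -> R) (hq : is_dist q) (nu : M * A -> R)
  (hnu : is_MEC b q nu) : decision_rule (meme_rule b q nu).
Proof.
have [[[nu0 nu1] [nm1 nm2]] nmin] := hnu.
move=> m; rewrite /meme_rule; have [bm0|bm0] := eqVneq (b m) 0.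
  exact: hq.
have bp : 0 < b m by rewrite lt_def bm0 hb.1.
split; first by move=> a; rewrite divr_ge0 // ltW.
have -> : \sum_a nu (m, a) / b m = marg1 nu m / b m by rewrite /marg1 mulr_suml.
by rewrite nm1 divff.
Qed.

Arguments meme_dr {R M A b} hb {q} hq {nu} hnu.

Lemma meme_c (R : realType) (M A : finType) (b : M -> R)
  (q : A -> R) (nu : M * A -> R)
  (hnu : is_MEC b q nu) :
  (fun x : M * A => b x.1 * meme_rule b q nu x.1 x.2) =1 nu.
Proof.
move=> [m a] /=; rewrite /meme_rule; have [bm0|bm0] := eqVneq (b m) 0.
  by rewrite bm0 mul0r (nuz_lem hnu).
by rewrite mulrC divfK.
Qed.

Arguments meme_c {R M A b q nu} hnu.

Lemma meme_mc (R : realType) (M A : finType) (b : M -> R)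
  (q : A -> R) (nu : M * A -> R)
  (hnu : is_MEC b q nu) : marginal_constraint b (meme_rule b q nu) q.
Proof.
move=> a; rewrite -(hnu.1.2.2 a) /marg2; apply: eq_bigr => m _.
exact: (meme_c hnu (m, a)).
Qed.

Arguments meme_mc {R M A b q nu} hnu.

Lemma sigma_coupling (R : realType) (M A : finType) (b : M -> R) (hb : is_dist b)
  (q : A -> R) (sigma : M -> A -> R) (hs : decision_rule sigma)
  (hq : marginal_constraint b sigma q) :
  is_coupling b q (fun x : M * A => b x.1 * sigma x.1 x.2).
Proof.
split; [split|split].
- by move=> [m a]; rewrite mulr_ge0 // ?hb.1 ?(hs m).1.
- rewrite sum_pair -hb.2; apply: eq_bigr => m _ /=.
  by rewrite -mulr_sumr (hs m).2 mulr1.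
- by move=> m; rewrite /marg1 /= -mulr_sumr (hs m).2 mulr1.
- by move=> a; rewrite /marg2 /= hq.
Qed.

Arguments sigma_coupling {R M A b} hb {q sigma} hs hq.

Theorem proposition3 (R : realType) (M A S : finType)
  (T : S -> A -> S -> R) (hT : forall s a, is_dist (T s a))
  (pi : S -> A -> R) (hpi : forall s, is_dist (pi s))
  (s : S) (b : M -> R) (hb : is_dist b)
  (nu : M * A -> R) (hnu : is_MEC b (pi s) nu) :
  decision_rule (meme_rule b (pi s) nu) /\
  marginal_constraint b (meme_rule b (pi s) nu) (pi s) /\
  (forall sigma : M -> A -> R, decision_rule sigma ->
     marginal_constraint b sigma (pi s) ->
     mutual_info (joint_next b sigma T s)
       <= mutual_info (joint_next b (meme_rule b (pi s) nu) T s)).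
Proof.
have hd := meme_dr hb (hpi s) hnu.
have hm := meme_mc hnu.
split=> //; split=> // sigma hs hq.
rewrite (@mi_eq _ _ _ _ _ hT s _ hb.1 _ hs _ hq) (@mi_eq _ _ _ _ _ hT s _ hb.1 _ hd _ hm).
rewrite (@entropy_ext _ _ _ _ (meme_c hnu)) lerD2l lerN2.
exact: hnu.2 _ (sigma_coupling hb hs hq).
Qed.
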